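(* Let $\mu=\alpha_-\delta_{-\infty}+\alpha_0\mu_0+\alpha_+\delta_{+\infty}\in\mathcal{P}(\overline{\mathbb{Z}})$ with $\alpha_\sigma\ge0$ summing to $1$, $\mu_0\in\mathcal{P}(\mathbb{Z})$ and $\alpha_0\ne0$. Let $0<\varepsilon<\alpha_0/2$, $R\in\mathbb{N}$ with $R>\max\{R_{\overline{\mathbb{Z}}}(\varepsilon),R_{\mu_0}(\varepsilon)\}$, $n\in\mathbb{N}$ and $w\in\Omega^{(0)}_n(\mu,2^{-R}\varepsilon)$. Then $\ell^0(w)$ is well defined and $$\|\ell^0(w)-\mu_0\|<\frac{6\varepsilon}{\alpha_0}.$$
   Context: $\overline{\mathbb{Z}}=\mathbb{Z}\cup\{\pm\infty\}$ with metric $d(h,k)=|\varphi(h)-\varphi(k)|$, $\varphi(\pm\infty)=\pm1$, $\varphi(k)=1-2^{-k}$ ($k\ge0$), $\varphi(k)=-1+2^{-|k|}$ ($k<0$). For signed measures, $\|\nu\|=\sup\{\int f\,d\nu: f\text{ 1-Lipschitz for }d,\ \sup|f|\le1\}$; $B(\mu,\varepsilon)=\{\nu\in\mathcal{P}(\overline{\mathbb{Z}}):\|\nu-\mu\|<\varepsilon\}$. $\Omega^{(0)}_n$: words $w=(w_1,\dots,w_n)\in\mathbb{Z}^n$, $w_1=0$, $|w_i-w_{i+1}|=1$; $\ell(w)=\frac1n\sum_j\delta_{w_j}$; $\Omega^{(0)}_n(\mu,\varepsilon)=\{w\in\Omega^{(0)}_n:\ell(w)\in B(\mu,\varepsilon)\}$.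 With $A^0=\{-R+1,\dots,R-1\}$, $N^0(w)=\#\{j\le n:w_j\in A^0\}$ and, when $N^0(w)\neq0$, $\ell^0(w)=\frac1{N^0(w)}\sum_{j\le n:\,w_j\in A^0}\delta_{w_j}$. $R_{\overline{\mathbb{Z}}}(\varepsilon)=\lceil\log_2(1/\varepsilon)\rceil+1$ and $R_{\mu_0}(\varepsilon)=\min\{R\in\mathbb{N}:\mu_0(\{-R+1,\dots,R-1\})>1-\varepsilon\}$. *)

(* Defs.v *)
From Stdlib Require Import Reals ZArith List Lra Lia ClassicalEpsilon.
From Coquelicot Require Import Coquelicot.
Open Scope R_scope.

Inductive ZExt : Type := ZNinf | ZFin (z : Z) | ZPinf.

Definition phi (h : ZExt) : R :=
  match h with
  | ZNinf => -1
  | ZPinf => 1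
  | ZFin k => if (0 <=? k)%Z then 1 - powerRZ 2 (- k) else -1 + powerRZ 2 k
  end.

Definition dZ (h k : ZExt) : R := Rabs (phi h - phi k).

Definition admissible (f : ZExt -> R) : Prop :=
  (forall h k, Rabs (f h - f k) <= dZ h k) /\ (forall h, Rabs (f h) <= 1).

(* Signed measures on the countable (discrete) space Zbar are represented by
   their point-mass functions nu : ZExt -> R.  Integral of f against nu
   (Z enumerated as 0,-1,1,-2,2,... via k |-> k and -k-1). *)
Definition integ (f : ZExt -> R) (nu : ZExt -> R) : R :=
  nu ZNinf * f ZNinf + nu ZPinf * f ZPinf +
  Series (fun k : nat =>
            nu (ZFin (Z.of_nat k)) * f (ZFin (Z.of_nat k)) +
            nu (ZFin (- Z.of_nat k - 1)%Z) * f (ZFin (- Z.of_nat k - 1)%Z)).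

Definition mnorm (nu : ZExt -> R) : Rbar :=
  Lub_Rbar (fun r => exists f, admissible f /\ r = integ f nu).

Definition msub (nu1 nu2 : ZExt -> R) : ZExt -> R := fun x => nu1 x - nu2 x.

Definition in_ball (nu mu : ZExt -> R) (eps : R) : Prop :=
  Rbar_lt (mnorm (msub nu mu)) (Finite eps).

Definition is_prob_Z (mu0 : Z -> R) : Prop :=
  (forall z, 0 <= mu0 z) /\
  ex_series (fun k : nat => mu0 (Z.of_nat k) + mu0 (- Z.of_nat k - 1)%Z) /\
  Series (fun k : nat => mu0 (Z.of_nat k) + mu0 (- Z.of_nat k - 1)%Z) = 1.

Definition extZ (mu0 : Z -> R) : ZExt -> R :=
  fun x => match x with ZFin z => mu0 z | _ => 0 end.

Definition mix (am a0 ap : R) (mu0 : Z -> R) : ZExt -> R :=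
  fun x => match x with ZNinf => am | ZPinf => ap | ZFin z => a0 * mu0 z end.

Definition in_Omega0 (n : nat) (w : list Z) : Prop :=
  length w = n /\ (exists rest, w = 0%Z :: rest) /\
  (forall i : nat, (S i < length w)%nat ->
     Z.abs (nth i w 0%Z - nth (S i) w 0%Z) = 1%Z).

Definition count_Z (w : list Z) (z : Z) : nat := count_occ Z.eq_dec w z.

Definition ell (w : list Z) : ZExt -> R :=
  fun x => match x with
           | ZFin z => INR (count_Z w z) / INR (length w)
           | _ => 0
           end.

Definition inA0 (Rr : nat) (z : Z) : bool := (Z.abs z <? Z.of_nat Rr)%Z.

Definition Nzero_count (Rr : nat) (w : list Z) : nat := length (filter (inA0 Rr) w).

Definition ell0 (Rr : nat) (w : list Z) : ZExt -> R :=
  fun x => match x with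
           | ZFin z => if inA0 Rr z then INR (count_Z w z) / INR (Nzero_count Rr w) else 0
           | _ => 0
           end.

Definition Rceil (x : R) : Z := (- Int_part (- x))%Z.

Definition log2 (x : R) : R := ln x / ln 2.

Definition R_Zbar (eps : R) : Z := (Rceil (log2 (1 / eps)) + 1)%Z.

Definition mass_A (mu0 : Z -> R) (Rr : nat) : R :=
  fold_right Rplus 0
    (map (fun k : nat => mu0 (Z.of_nat k - Z.of_nat Rr + 1)%Z) (seq 0 (2 * Rr - 1))).

Definition is_R_mu0 (mu0 : Z -> R) (eps : R) (r : nat) : Prop :=
  mass_A mu0 r > 1 - eps /\ (forall r', mass_A mu0 r' > 1 - eps -> (r <= r')%nat).

Definition R_mu0 (mu0 : Z -> R) (eps : R) : nat :=
  epsilon (inhabits 0%nat) (is_R_mu0 mu0 eps).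

(* Main.v *)
Require Import Defs.
From Stdlib Require Import Reals ZArith List.
From Coquelicot Require Import Coquelicot.
From Stdlib Require Import Lra Lia ClassicalEpsilon Classical Bool.
Open Scope R_scope.

Fixpoint fs (a : nat -> R) (n : nat) : R :=
  match n with O => 0 | S m => fs a m + a m end.

Lemma fs_ext a b n : (forall k, (k < n)%nat -> a k = b k) -> fs a n = fs b n.
Proof. induction n; simpl; intros H; auto. rewrite IHn by (intros; apply H; lia). rewrite H by lia. auto. Qed.

Lemma fs_plus a b n : fs (fun k => a k + b k) n = fs a n + fs b n.
Proof. induction n; simpl; [lra|]. rewrite IHn. lra. Qed.

Lemma fs_minus a b n : fs (fun k => a k - b k) n = fs a n - fs b n.
Proof. induction n; simpl; [lra|]. rewrite IHn. lra. Qed.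

Lemma fs_scal c a n : fs (fun k => c * a k) n = c * fs a n.
Proof. induction n; simpl; [lra|]. rewrite IHn. lra. Qed.

Lemma fs_zero a n : (forall k, (k < n)%nat -> a k = 0) -> fs a n = 0.
Proof. intros H. rewrite (fs_ext a (fun _ => 0)) by auto. clear H. induction n; simpl; lra. Qed.

Lemma fs_Sl a n : fs a (S n) = a 0%nat + fs (fun k => a (S k)) n.
Proof. induction n; simpl in *; [lra|]. rewrite IHn. lra. Qed.

Lemma fs_le a b n : (forall k, (k < n)%nat -> a k <= b k) -> fs a n <= fs b n.
Proof. induction n; simpl; intros H; [lra|]. assert (fs a n <= fs b n) by (apply IHn; intros; apply H; lia).
  assert (a n <= b n) by (apply H; lia). lra. Qed.

Lemma fs_abs a b n : (forall k, (k < n)%nat -> Rabs (a k) <= b k) -> Rabs (fs a n) <= fs b n.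
Proof. induction n; simpl; intros H. rewrite Rabs_R0; lra.
  assert (Rabs (fs a n) <= fs b n) by (apply IHn; intros; apply H; lia).
  assert (Rabs (a n) <= b n) by (apply H; lia).
  eapply Rle_trans. apply Rabs_triang. lra. Qed.

Lemma fs_mono a m n : (forall k, 0 <= a k) -> (m <= n)%nat -> fs a m <= fs a n.
Proof. intros H Hmn. induction Hmn; simpl; [lra|]. specialize (H m0). lra. Qed.

Lemma fs_add a m n : fs a (m + n) = fs a m + fs (fun j => a (m + j)%nat) n.
Proof. induction n; simpl. rewrite Nat.add_0_r; lra. rewrite Nat.add_succ_r. simpl. rewrite IHn. lra. Qed.

Lemma fs_rev a n : fs a n = fs (fun k => a (n - 1 - k)%nat) n.
Proof. induction n. reflexivity.
  transitivity (fs a n + a n); [reflexivity|]. rewrite fs_Sl, IHn.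
  replace (S n - 1 - 0)%nat with n by lia.
  rewrite (fs_ext (fun k => a (n - 1 - k)%nat) (fun k => a (S n - 1 - S k)%nat)) by (intros; f_equal; lia).
  lra. Qed.

Lemma fs_stable a K n : (forall k, (K <= k)%nat -> a k = 0) -> (K <= n)%nat -> fs a n = fs a K.
Proof. intros H Hn. induction Hn; auto. simpl. rewrite IHHn, H by lia. lra. Qed.

Lemma sum_f_fs a n : sum_f_R0 a n = fs a (S n).
Proof. induction n; simpl in *. lra. rewrite IHn. lra. Qed.

Lemma is_series_fin a K : (forall k, (K <= k)%nat -> a k = 0) -> is_series a (fs a K).
Proof. intros H. apply is_series_Reals. intros e He. exists K. intros n Hn.
  rewrite sum_f_fs. rewrite (fs_stable a K (S n)) by (auto; lia). unfold R_dist.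
  replace (fs a K - fs a K) with 0 by lra. rewrite Rabs_R0; lra. Qed.

Lemma Series_fin a K : (forall k, (K <= k)%nat -> a k = 0) -> Series a = fs a K.
Proof. intros H. apply is_series_unique. apply is_series_fin; auto. Qed.

Lemma fold_fs h s n : fold_right Rplus 0 (map h (seq s n)) = fs (fun j => h (s + j)%nat) n.
Proof. revert s. induction n; intros s. reflexivity.
  simpl seq. simpl map. simpl fold_right. rewrite fs_Sl. rewrite IHn. rewrite Nat.add_0_r.
  f_equal. apply fs_ext. intros; f_equal; lia. Qed.

Lemma least_nat (P : nat -> Prop) : (exists n, P n) -> exists n, P n /\ forall m, P m -> (n <= m)%nat.
Proof. intros [n Hn]. induction n as [n IH] using (well_founded_induction lt_wf).
  destruct (classic (exists m, (m < n)%nat /\ P m)) as [[m [Hm Pm]]|Hno].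
  - exact (IH m Hm Pm).
  - exists n; split; auto. intros m Pm. destruct (le_lt_dec n m); auto. exfalso; apply Hno; eauto. Qed.

Definition SK (h : Z -> R) (K : nat) : R :=
  fs (fun k => h (Z.of_nat k) + h (- Z.of_nat k - 1)%Z) K.

Lemma SK_ext h1 h2 K : (forall z, h1 z = h2 z) -> SK h1 K = SK h2 K.
Proof. intros H. unfold SK. apply fs_ext. intros. rewrite !H. auto. Qed.

Lemma SK_plus h1 h2 K : SK (fun z => h1 z + h2 z) K = SK h1 K + SK h2 K.
Proof. unfold SK. rewrite <- fs_plus. apply fs_ext. intros; lra. Qed.

Lemma SK_minus h1 h2 K : SK (fun z => h1 z - h2 z) K = SK h1 K - SK h2 K.
Proof. unfold SK. rewrite <- fs_minus. apply fs_ext. intros; lra. Qed.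

Lemma SK_scal c h K : SK (fun z => c * h z) K = c * SK h K.
Proof. unfold SK. rewrite <- fs_scal. apply fs_ext. intros; lra. Qed.

Lemma SK_abs h1 h2 K : (forall z, Rabs (h1 z) <= h2 z) -> Rabs (SK h1 K) <= SK h2 K.
Proof. intros H. unfold SK. apply fs_abs. intros. eapply Rle_trans. apply Rabs_triang.
  pose proof (H (Z.of_nat k)). pose proof (H (- Z.of_nat k - 1)%Z). lra. Qed.

Lemma SK_point h a K : (forall z, z <> a -> h z = 0) ->
  SK h K = if (andb (- Z.of_nat K <=? a)%Z (a <? Z.of_nat K)%Z) then h a else 0.
Proof. intros H. induction K as [|K IHK].
  - unfold SK; simpl. destruct (andb (0 <=? a)%Z (a <? 0)%Z) eqn:E; auto.
    apply andb_true_iff in E. destruct E as [E1 E2]. apply Z.leb_le in E1; apply Z.ltb_lt in E2. lia.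
  - unfold SK in *. simpl fs. rewrite IHK.
    destruct (Z.eq_dec a (Z.of_nat K)) as [e|ne].
    + subst a. rewrite (H (- Z.of_nat K - 1)%Z) by lia.
      replace (andb (- Z.of_nat K <=? Z.of_nat K)%Z (Z.of_nat K <? Z.of_nat K)%Z) with false
        by (symmetry; apply andb_false_iff; right; apply Z.ltb_ge; lia).
      replace (andb (- Z.of_nat (S K) <=? Z.of_nat K)%Z (Z.of_nat K <? Z.of_nat (S K))%Z) with true
        by (symmetry; apply andb_true_iff; split; [apply Z.leb_le|apply Z.ltb_lt]; lia).
      lra.
    + rewrite (H (Z.of_nat K)) by auto.
      destruct (Z.eq_dec a (- Z.of_nat K - 1)%Z) as [e2|ne2].
      * subst a.
        replace (andb (- Z.of_nat K <=? - Z.of_nat K - 1)%Z (- Z.of_nat K - 1 <? Z.of_nat K)%Z) with false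
          by (symmetry; apply andb_false_iff; left; apply Z.leb_gt; lia).
        replace (andb (- Z.of_nat (S K) <=? - Z.of_nat K - 1)%Z (- Z.of_nat K - 1 <? Z.of_nat (S K))%Z) with true
          by (symmetry; apply andb_true_iff; split; [apply Z.leb_le|apply Z.ltb_lt]; lia).
        lra.
      * rewrite (H (- Z.of_nat K - 1)%Z) by auto.
        replace (andb (- Z.of_nat (S K) <=? a)%Z (a <? Z.of_nat (S K))%Z) with
                (andb (- Z.of_nat K <=? a)%Z (a <? Z.of_nat K)%Z).
        lra.
        destruct (andb (- Z.of_nat K <=? a)%Z (a <? Z.of_nat K)%Z) eqn:E1;
        destruct (andb (- Z.of_nat (S K) <=? a)%Z (a <? Z.of_nat (S K))%Z) eqn:E2; auto;
        repeat match goal with H : (_ && _)%bool = _ |- _ => (apply andb_true_iff in H || apply andb_false_iff in H) end;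
        repeat match goal with
               | H : _ /\ _ |- _ => destruct H
               | H : _ \/ _ |- _ => destruct H
               | H : (_ <=? _)%Z = true |- _ => apply Z.leb_le in H
               | H : (_ <=? _)%Z = false |- _ => apply Z.leb_gt in H
               | H : (_ <? _)%Z = true |- _ => apply Z.ltb_lt in H
               | H : (_ <? _)%Z = false |- _ => apply Z.ltb_ge in H
               end; lia.
Qed.

Lemma SK_fin_series (h : Z -> R) (R0 : nat) :
  (forall z, (Z.of_nat R0 <= Z.abs z)%Z -> h z = 0) ->
  is_series (fun k => h (Z.of_nat k) + h (- Z.of_nat k - 1)%Z) (SK h R0).
Proof. intros H. unfold SK. apply is_series_fin. intros k Hk. rewrite !H by lia. lra. Qed.

Lemma mass_A_eq mu0 r : mass_A mu0 r =
  fs (fun k => mu0 (Z.of_nat k)) r + fs (fun k => mu0 (- Z.of_nat k - 1)%Z) (r - 1).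
Proof. unfold mass_A. rewrite fold_fs. destruct r as [|r']. simpl. lra.
  replace (2 * S r' - 1)%nat with (r' + S r')%nat by lia. rewrite fs_add.
  rewrite fs_rev. replace (S r' - 1)%nat with r' by lia.
  rewrite Rplus_comm. f_equal.
  - apply fs_ext. intros. f_equal. lia.
  - apply fs_ext. intros. f_equal. lia.
Qed.

Lemma SK_mass mu0 r : SK (fun z => if inA0 r z then mu0 z else 0) r = mass_A mu0 r.
Proof. rewrite mass_A_eq. unfold SK.
  rewrite (fs_ext _ (fun k => mu0 (Z.of_nat k) + (if (S k <? r)%nat then mu0 (- Z.of_nat k - 1)%Z else 0))).
  2:{ intros k Hk. unfold inA0. replace (Z.abs (Z.of_nat k) <? Z.of_nat r)%Z with true
        by (symmetry; apply Z.ltb_lt; lia).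
      destruct (S k <? r)%nat eqn:E.
      - apply Nat.ltb_lt in E. replace (Z.abs (- Z.of_nat k - 1) <? Z.of_nat r)%Z with true
        by (symmetry; apply Z.ltb_lt; lia). auto.
      - apply Nat.ltb_ge in E. replace (Z.abs (- Z.of_nat k - 1) <? Z.of_nat r)%Z with false
        by (symmetry; apply Z.ltb_ge; lia). auto. }
  rewrite fs_plus. f_equal. destruct r as [|r']. reflexivity.
  simpl fs at 1. replace (S r' - 1)%nat with r' by lia.
  replace (S r' <? S r')%nat with false by (symmetry; apply Nat.ltb_ge; lia).
  rewrite Rplus_0_r. apply fs_ext. intros k Hk. replace (S k <? S r')%nat with true by (symmetry; apply Nat.ltb_lt; lia). auto.
Qed.

Lemma mass_mono mu0 m n : (forall z, 0 <= mu0 z) -> (m <= n)%nat -> mass_A mu0 m <= mass_A mu0 n.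
Proof. intros H Hmn. rewrite !mass_A_eq.
  assert (fs (fun k => mu0 (Z.of_nat k)) m <= fs (fun k => mu0 (Z.of_nat k)) n) by (apply fs_mono; auto).
  assert (fs (fun k => mu0 (- Z.of_nat k - 1)%Z) (m-1) <= fs (fun k => mu0 (- Z.of_nat k - 1)%Z) (n-1)) by (apply fs_mono; auto; lia).
  lra. Qed.

Lemma R_mu0_spec mu0 eps : is_prob_Z mu0 -> 0 < eps -> mass_A mu0 (R_mu0 mu0 eps) > 1 - eps.
Proof. intros [Hpos [Hex Hs]] He. unfold R_mu0. 
  assert (Hexr : exists r, is_R_mu0 mu0 eps r).
  { assert (HS := Series_correct _ Hex). rewrite Hs in HS. apply is_series_Reals in HS.
    destruct (HS eps He) as [N HN]. specialize (HN N (le_n _)). rewrite sum_f_fs in HN.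
    unfold R_dist in HN. apply Rabs_def2 in HN.
    destruct (least_nat (fun r => mass_A mu0 r > 1 - eps)) as [r [H1 H2]].
    { exists (S (S N)). rewrite mass_A_eq. replace (S (S N) - 1)%nat with (S N) by lia.
      rewrite fs_plus in HN.
      assert (fs (fun k => mu0 (Z.of_nat k)) (S N) <= fs (fun k => mu0 (Z.of_nat k)) (S (S N))) by (apply fs_mono; auto).
      lra. }
    exists r. split; auto. }
  apply (epsilon_spec (inhabits 0%nat) (is_R_mu0 mu0 eps) Hexr).
Qed.

Lemma pow2_posR n : 0 < 2 ^ n.
Proof. apply pow_lt; lra. Qed.

Lemma inv_pow_le m n : (m <= n)%nat -> / 2 ^ n <= / 2 ^ m.
Proof. intros H. apply Rinv_le_contravar. apply pow2_posR. apply Rle_pow; lra || auto. Qed.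

Lemma inv_pow_S m : / 2 ^ m = 2 * / 2 ^ (S m).
Proof. simpl. pose proof (pow2_posR m). field. lra. Qed.

Lemma phi_nat m : phi (ZFin (Z.of_nat m)) = 1 - / 2 ^ m.
Proof. unfold phi. replace (0 <=? Z.of_nat m)%Z with true by (symmetry; apply Z.leb_le; lia).
  rewrite powerRZ_neg', <- pow_powerRZ. auto. Qed.

Lemma phi_neg m : phi (ZFin (- Z.of_nat (S m))) = -1 + / 2 ^ (S m).
Proof. unfold phi. replace (0 <=? - Z.of_nat (S m))%Z with false by (symmetry; apply Z.leb_gt; lia).
  rewrite powerRZ_neg', <- pow_powerRZ. auto. Qed.

Lemma Z_cases z : (exists m, z = Z.of_nat m) \/ (exists m, z = (- Z.of_nat (S m))%Z).
Proof. destruct (Z_le_gt_dec 0 z).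
  - left. exists (Z.to_nat z). rewrite Z2Nat.id; lia.
  - right. exists (Z.to_nat (- z - 1)). rewrite Nat2Z.inj_succ, Z2Nat.id; lia. Qed.

Lemma phi_in R z : (Z.abs z < Z.of_nat R)%Z -> -1 + 2 * / 2 ^ R <= phi (ZFin z) <= 1 - 2 * / 2 ^ R.
Proof. intros H. pose proof (pow2_posR R).
  assert (Hh : forall k, (1 <= k)%nat -> / 2 ^ k <= / 2).
  { intros k Hk. replace (/ 2) with (/ 2 ^ 1) by (simpl; f_equal; lra). apply inv_pow_le; auto. }
  assert (/ 2 ^ R <= / 2) by (apply Hh; lia).
  destruct (Z_cases z) as [[m ->]|[m ->]].
  - rewrite phi_nat. rewrite (inv_pow_S m). assert (/ 2 ^ R <= / 2 ^ (S m)) by (apply inv_pow_le; lia).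
    assert (0 < / 2 ^ (S m)) by (apply Rinv_0_lt_compat, pow2_posR). pose proof (Hh (S m)). assert (/ 2 ^ S m <= / 2) by (apply Hh; lia). lra.
  - rewrite phi_neg. rewrite (inv_pow_S (S m)). assert (/ 2 ^ R <= / 2 ^ (S (S m))) by (apply inv_pow_le; lia).
    assert (0 < / 2 ^ (S (S m))) by (apply Rinv_0_lt_compat, pow2_posR). assert (/ 2 ^ S (S m) <= / 2) by (apply Hh; lia). lra.
Qed.

Lemma phi_out R z : (Z.of_nat R <= Z.abs z)%Z -> 1 - / 2 ^ R <= phi (ZFin z) \/ phi (ZFin z) <= -1 + / 2 ^ R.
Proof. intros H. destruct (Z_cases z) as [[m ->]|[m ->]].
  - left. rewrite phi_nat. assert (/ 2 ^ m <= / 2 ^ R) by (apply inv_pow_le; lia). lra.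
  - right. rewrite phi_neg. assert (/ 2 ^ (S m) <= / 2 ^ R) by (apply inv_pow_le; lia). lra.
Qed.

Definition PA (R : nat) (x : ZExt) : bool := match x with ZFin z => inA0 R z | _ => false end.

Lemma dist_sep R x y : PA R x = true -> PA R y = false -> / 2 ^ R <= dZ x y.
Proof. intros Hx Hy. destruct x as [|z|]; try discriminate. simpl in Hx. unfold inA0 in Hx.
  apply Z.ltb_lt in Hx. destruct (phi_in R z Hx) as [H1 H2].
  assert (0 < / 2 ^ R) by (apply Rinv_0_lt_compat, pow2_posR).
  unfold dZ. destruct y as [|z'|].
  - change (phi ZNinf) with (-1). unfold Rabs; destruct Rcase_abs; lra.
  - simpl in Hy. unfold inA0 in Hy. apply Z.ltb_ge in Hy.
    destruct (phi_out R z' Hy); unfold Rabs; destruct Rcase_abs; lra.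
  - change (phi ZPinf) with 1. unfold Rabs; destruct Rcase_abs; lra.
Qed.

Lemma dZ_sym x y : dZ x y = dZ y x.
Proof. unfold dZ. apply Rabs_minus_sym. Qed.

Lemma adm_local R g : (forall x, PA R x = false -> g x = 0) -> (forall x, Rabs (g x) <= / 2 ^ R) ->
  (forall x y, PA R x = true -> PA R y = true -> Rabs (g x - g y) <= dZ x y) -> admissible g.
Proof. intros H0 Hb Hl. assert (/ 2 ^ R <= 1).
  { replace 1 with (/ 2 ^ 0) by (simpl; lra). apply inv_pow_le; lia. }
  split.
  - intros h k. destruct (PA R h) eqn:Eh, (PA R k) eqn:Ek.
    + auto.
    + rewrite (H0 k Ek), Rminus_0_r. eapply Rle_trans. apply Hb. apply dist_sep; auto.
    + rewrite (H0 h Eh), Rminus_0_l, Rabs_Ropp. eapply Rle_trans. apply Hb. rewrite dZ_sym. apply dist_sep; auto.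
    + rewrite (H0 h Eh), (H0 k Ek), Rminus_0_r, Rabs_R0. unfold dZ; apply Rabs_pos.
  - intros h. eapply Rle_trans. apply Hb. auto.
Qed.

Lemma integ_fin R g nu : (forall x, PA R x = false -> nu x * g x = 0) ->
  integ g nu = SK (fun z => nu (ZFin z) * g (ZFin z)) R.
Proof. intros H. unfold integ. rewrite (H ZNinf), (H ZPinf) by auto.
  rewrite (Series_fin _ R). unfold SK. lra.
  intros k Hk. rewrite !H. lra.
  simpl. unfold inA0. apply Z.ltb_ge. lia.
  simpl. unfold inA0. apply Z.ltb_ge. lia.
Qed.

Lemma SK_zero h K : (forall z, h z = 0) -> SK h K = 0.
Proof. intros H. unfold SK. apply fs_zero. intros. rewrite !H. lra. Qed.

Lemma count_SK Rr w : SK (fun z => if inA0 Rr z then INR (count_Z w z) else 0) Rr = INR (Nzero_count Rr w).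
Proof. induction w as [|a w IH].
  - apply SK_zero. intros z. destruct (inA0 Rr z); reflexivity.
  - rewrite (SK_ext _ (fun z => (if inA0 Rr z then INR (count_Z w z) else 0) +
         (if inA0 Rr z then (if Z.eq_dec a z then 1 else 0) else 0))).
    2:{ intros z. unfold count_Z. simpl count_occ. destruct (inA0 Rr z); [|lra].
        destruct (Z.eq_dec a z); [rewrite S_INR|]; lra. }
    rewrite SK_plus, IH. rewrite (SK_point _ a).
    2:{ intros z Hz. destruct (inA0 Rr z); auto. destruct (Z.eq_dec a z); auto. congruence. }
    unfold Nzero_count. simpl filter.
    destruct (Z.eq_dec a a) as [_|n]; [|congruence].
    destruct (inA0 Rr a) eqn:E.
    + unfold inA0 in E. apply Z.ltb_lt in E.
      replace (andb (- Z.of_nat Rr <=? a)%Z (a <? Z.of_nat Rr)%Z) with true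
        by (symmetry; apply andb_true_iff; split; [apply Z.leb_le|apply Z.ltb_lt]; lia).
      simpl length. rewrite S_INR. lra.
    + destruct (andb _ _); lra.
Qed.

Lemma ball_use nu mu d g : in_ball nu mu d -> admissible g -> integ g (msub nu mu) < d.
Proof. intros Hb Hg. unfold in_ball, mnorm in Hb.
  destruct (Lub_Rbar_correct (fun r => exists f, admissible f /\ r = integ f (msub nu mu))) as [Hub _].
  assert (H := Hub (integ g (msub nu mu)) (ex_intro _ g (conj Hg eq_refl))).
  pose proof (Rbar_le_lt_trans _ _ _ H Hb). simpl in H0. exact H0. Qed.

Theorem lemma2p5 (am a0 ap : R) (mu0 : Z -> R) (eps : R) (Rr n : nat) (w : list Z) :
  0 <= am -> 0 <= a0 -> 0 <= ap -> am + a0 + ap = 1 -> a0 <> 0 ->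
  is_prob_Z mu0 ->
  0 < eps -> eps < a0 / 2 ->
  (R_Zbar eps < Z.of_nat Rr)%Z -> (R_mu0 mu0 eps < Rr)%nat ->
  in_Omega0 n w ->
  in_ball (ell w) (mix am a0 ap mu0) (eps / 2 ^ Rr) ->
  Nzero_count Rr w <> 0%nat /\
  Rbar_lt (mnorm (msub (ell0 Rr w) (extZ mu0))) (Finite (6 * eps / a0)).
Proof.
  intros Ham Ha0 Hap Hsum Ha0n Hprob Heps Heps2 _ HRmu _ Hball.
  pose proof Hprob as [Hmu_pos [Hmu_ex Hmu_s]].
  assert (Hmass : mass_A mu0 Rr > 1 - eps).
  { pose proof (R_mu0_spec mu0 eps Hprob Heps). pose proof (mass_mono mu0 (R_mu0 mu0 eps) Rr Hmu_pos ltac:(lia)). lra. }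
  assert (Ha0p : 0 < a0) by lra.
  assert (Ha01 : a0 <= 1) by lra.
  pose proof (pow2_posR Rr) as HP.
  assert (HN0 : Nzero_count Rr w <> 0%nat).
  { intros H0.
    set (g0 := fun x => if PA Rr x then - / 2 ^ Rr else 0).
    assert (Hadm : admissible g0).
    { apply (adm_local Rr).
      - intros x Hx. unfold g0. rewrite Hx. auto.
      - intros x. unfold g0. assert (0 < / 2 ^ Rr) by (apply Rinv_0_lt_compat, pow2_posR).
        destruct (PA Rr x).
        + rewrite Rabs_Ropp, Rabs_pos_eq; lra.
        + rewrite Rabs_R0. lra.
      - intros x y Hx Hy. unfold g0. rewrite Hx, Hy. replace (- / 2 ^ Rr - - / 2 ^ Rr) with 0 by lra.
        rewrite Rabs_R0. unfold dZ; apply Rabs_pos. }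
    pose proof (ball_use _ _ _ _ Hball Hadm) as Hlt.
    rewrite (integ_fin Rr) in Hlt.
    2:{ intros x Hx. unfold g0. rewrite Hx. lra. }
    rewrite (SK_ext _ (fun z => (/ 2 ^ Rr * a0) * (if inA0 Rr z then mu0 z else 0))) in Hlt.
    2:{ intros z. unfold g0, msub, ell, mix. simpl PA. destruct (inA0 Rr z) eqn:E; [|lra].
        assert (Hc : count_Z w z = 0%nat).
        { unfold count_Z. apply count_occ_not_In. intros Hin.
          unfold Nzero_count in H0. apply length_zero_iff_nil in H0.
          assert (In z (filter (inA0 Rr) w)) by (apply filter_In; auto). rewrite H0 in H; auto. }
        rewrite Hc. simpl INR. unfold Rdiv. ring. }
    rewrite SK_scal, SK_mass in Hlt.
    assert (a0 * mass_A mu0 Rr < eps).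
    { unfold Rdiv in Hlt. assert (0 < / 2 ^ Rr) by (apply Rinv_0_lt_compat, pow2_posR). nra. }
    nra. }
  split; [exact HN0|].

  assert (HN0r : 0 < INR (Nzero_count Rr w)) by (apply lt_0_INR; lia).
  set (C := 2 * eps / a0 + 2 * (1 - mass_A mu0 Rr)).
  assert (HC : C < 6 * eps / a0).
  { unfold C. set (t := eps / a0).
    assert (Ht : eps = a0 * t) by (unfold t; field; lra).
    assert (Ht6 : 6 * eps / a0 = 6 * t) by (unfold t; field; lra).
    assert (Ht2 : 2 * eps / a0 = 2 * t) by (unfold t; field; lra).
    rewrite Ht6, Ht2. assert (0 < t) by (unfold t; apply Rdiv_lt_0_compat; lra). nra. }
  assert (Hall : forall f, admissible f -> integ f (msub (ell0 Rr w) (extZ mu0)) < C).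
  2:{ unfold mnorm. apply Rbar_le_lt_trans with (y := Finite C); [| exact HC].
      destruct (Lub_Rbar_correct (fun r => exists f, admissible f /\ r = integ f (msub (ell0 Rr w) (extZ mu0)))) as [_ Hl].
      apply Hl. intros r [f [Hf ->]]. simpl. left. apply Hall; auto. }
  intros f Hf. destruct Hf as [HfL HfB].
  assert (HF : forall x, -1 <= f x <= 1) by (intros x; apply Rabs_le_between; auto).
  set (N0 := INR (Nzero_count Rr w)).
  set (u := SK (fun z => ell0 Rr w (ZFin z) * f (ZFin z)) Rr).
  assert (Hl0 : forall z, ell0 Rr w (ZFin z) = / N0 * (if inA0 Rr z then INR (count_Z w z) else 0)).
  { intros z. unfold ell0, N0. destruct (inA0 Rr z); unfold Rdiv; ring. }
  assert (Hl0pos : forall z, 0 <= ell0 Rr w (ZFin z)).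
  { intros z. rewrite Hl0. apply Rmult_le_pos. left; apply Rinv_0_lt_compat; auto.
    destruct (inA0 Rr z); [apply pos_INR|lra]. }
  assert (Hsum1 : SK (fun z => ell0 Rr w (ZFin z)) Rr = 1).
  { rewrite (SK_ext _ _ _ Hl0), SK_scal, count_SK. fold N0. field. unfold N0; lra. }
  assert (Hu1 : -1 <= u <= 1).
  { apply Rabs_le_between. unfold u. rewrite <- Hsum1. apply SK_abs. intros z.
    cbv beta. rewrite Rabs_mult, (Rabs_pos_eq (ell0 Rr w (ZFin z))) by auto.
    pose proof (HfB (ZFin z)). pose proof (Hl0pos z). nra. }
  assert (HuN : SK (fun z => if inA0 Rr z then INR (count_Z w z) * f (ZFin z) else 0) Rr = N0 * u).
  { unfold u. rewrite (SK_ext (fun z => ell0 Rr w (ZFin z) * f (ZFin z)) (fun z => / N0 * (if inA0 Rr z then INR (count_Z w z) * f (ZFin z) else 0))).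
    2:{ intros z. rewrite Hl0. destruct (inA0 Rr z); ring. }
    rewrite SK_scal. field. unfold N0; lra. }
  set (c := / 2 ^ (S Rr)).
  assert (Hc : 0 < c) by (apply Rinv_0_lt_compat, pow2_posR).
  assert (Hc2 : 2 * c = / 2 ^ Rr) by (unfold c; rewrite (inv_pow_S Rr); ring).
  assert (Hc1 : c <= 1).
  { unfold c. replace 1 with (/ 2 ^ 0) by (simpl; lra). apply inv_pow_le; lia. }
  set (g := fun x => if PA Rr x then c * (f x - u) else 0).
  assert (Hadm : admissible g).
  { apply (adm_local Rr).
    - intros x Hx. unfold g. rewrite Hx. auto.
    - intros x. unfold g. destruct (PA Rr x).
      + rewrite Rabs_mult, Rabs_pos_eq by lra. rewrite <- Hc2.
        pose proof (HF x). assert (Rabs (f x - u) <= 2) by (apply Rabs_le_between; lra). nra.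
      + rewrite Rabs_R0. lra.
    - intros x y Hx Hy. unfold g. rewrite Hx, Hy.
      replace (c * (f x - u) - c * (f y - u)) with (c * (f x - f y)) by ring.
      rewrite Rabs_mult, Rabs_pos_eq by lra. pose proof (HfL x y).
      assert (0 <= Rabs (f x - f y)) by apply Rabs_pos. nra. }
  pose proof (ball_use _ _ _ _ Hball Hadm) as Hlt.
  rewrite (integ_fin Rr) in Hlt.
  2:{ intros x Hx. unfold g. rewrite Hx. lra. }
  set (WA := SK (fun z => if inA0 Rr z then mu0 z * (u - f (ZFin z)) else 0) Rr).
  set (L := INR (length w)).
  rewrite (SK_ext _ (fun z => c * / L * (if inA0 Rr z then INR (count_Z w z) * f (ZFin z) else 0)
                       - c * / L * u * (if inA0 Rr z then INR (count_Z w z) else 0)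
                       + c * a0 * (if inA0 Rr z then mu0 z * (u - f (ZFin z)) else 0))) in Hlt.
  2:{ intros z. unfold g, msub, ell, mix. simpl PA. fold L. destruct (inA0 Rr z); unfold Rdiv; ring. }
  rewrite SK_plus, SK_minus, !SK_scal, HuN, count_SK in Hlt. fold N0 WA in Hlt.
  assert (HWA : WA < 2 * eps / a0).
  { assert (c * a0 * WA < eps / 2 ^ Rr) by lra.
    unfold Rdiv in H. rewrite <- Hc2 in H.
    assert (a0 * WA < 2 * eps) by nra.
    apply (Rmult_lt_reg_l a0); auto. replace (a0 * (2 * eps / a0)) with (2 * eps) by (field; lra). lra. }

  set (M := fun k : nat => mu0 (Z.of_nat k) + mu0 (- Z.of_nat k - 1)%Z).
  set (T := fun k : nat => mu0 (Z.of_nat k) * f (ZFin (Z.of_nat k)) + mu0 (- Z.of_nat k - 1)%Z * f (ZFin (- Z.of_nat k - 1)%Z)).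
  assert (HexT : ex_series T).
  { apply (ex_series_le T M); [|exact Hmu_ex]. intros k. change (norm (T k)) with (Rabs (T k)). unfold T, M.
    eapply Rle_trans; [apply Rabs_triang|]. rewrite !Rabs_mult, !(Rabs_pos_eq (mu0 _)) by auto.
    pose proof (HfB (ZFin (Z.of_nat k))). pose proof (HfB (ZFin (- Z.of_nat k - 1)%Z)).
    pose proof (Hmu_pos (Z.of_nat k)). pose proof (Hmu_pos (- Z.of_nat k - 1)%Z). nra. }
  set (ST := Series T).
  assert (Hul : is_series (fun k => ell0 Rr w (ZFin (Z.of_nat k)) * f (ZFin (Z.of_nat k)) + ell0 Rr w (ZFin (- Z.of_nat k - 1)%Z) * f (ZFin (- Z.of_nat k - 1)%Z)) u).
  { unfold u. apply (SK_fin_series (fun z => ell0 Rr w (ZFin z) * f (ZFin z))). intros z Hz. unfold ell0.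
    replace (inA0 Rr z) with false by (symmetry; unfold inA0; apply Z.ltb_ge; lia). ring. }
  assert (Hval : integ f (msub (ell0 Rr w) (extZ mu0)) = u - ST).
  { unfold integ, msub. replace (ell0 Rr w ZNinf) with 0 by reflexivity.
    replace (ell0 Rr w ZPinf) with 0 by reflexivity.
    replace (extZ mu0 ZNinf) with 0 by reflexivity. replace (extZ mu0 ZPinf) with 0 by reflexivity.
    rewrite (Series_ext _ (fun k => (ell0 Rr w (ZFin (Z.of_nat k)) * f (ZFin (Z.of_nat k)) + ell0 Rr w (ZFin (- Z.of_nat k - 1)%Z) * f (ZFin (- Z.of_nat k - 1)%Z)) - T k)).
    2:{ intros k. unfold T. change (extZ mu0 (ZFin (Z.of_nat k))) with (mu0 (Z.of_nat k)).
        change (extZ mu0 (ZFin (- Z.of_nat k - 1)%Z)) with (mu0 (- Z.of_nat k - 1)%Z). ring. }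
    rewrite Series_minus; [| exists u; exact Hul | exact HexT]. rewrite (is_series_unique _ _ Hul). fold ST. ring. }
  set (hA := fun z => if inA0 Rr z then mu0 z else 0).
  set (hW := fun z => if inA0 Rr z then mu0 z * (u - f (ZFin z)) else 0).
  assert (HMa : is_series (fun k => hA (Z.of_nat k) + hA (- Z.of_nat k - 1)%Z) (mass_A mu0 Rr)).
  { rewrite <- SK_mass. apply (SK_fin_series hA). intros z Hz. unfold hA.
    replace (inA0 Rr z) with false by (symmetry; unfold inA0; apply Z.ltb_ge; lia). auto. }
  assert (HWs : is_series (fun k => hW (Z.of_nat k) + hW (- Z.of_nat k - 1)%Z) WA).
  { apply (SK_fin_series hW). intros z Hz. unfold hW.
    replace (inA0 Rr z) with false by (symmetry; unfold inA0; apply Z.ltb_ge; lia). auto. }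
  assert (HM : is_series M 1) by (rewrite <- Hmu_s; apply Series_correct; auto).
  assert (HT : is_series T ST) by (apply Series_correct; auto).
  set (D := fun k => 2 * M k - 2 * (hA (Z.of_nat k) + hA (- Z.of_nat k - 1)%Z) - u * M k + T k
                     + (hW (Z.of_nat k) + hW (- Z.of_nat k - 1)%Z)).
  assert (HD : is_series D (2 * 1 - 2 * mass_A mu0 Rr - u * 1 + ST + WA)).
  { exact (is_series_plus _ _ _ _ (is_series_plus _ _ _ _ (is_series_minus _ _ _ _ (is_series_minus _ _ _ _ (is_series_scal_l 2 _ _ HM) (is_series_scal_l 2 _ _ HMa)) (is_series_scal_l u _ _ HM)) HT) HWs). }
  set (dz := fun z => 2 * mu0 z - 2 * hA z - u * mu0 z + mu0 z * f (ZFin z) + hW z).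
  assert (Hdz : forall z, 0 <= dz z).
  { intros z. unfold dz, hA, hW. pose proof (Hmu_pos z). pose proof (HF (ZFin z)).
    destruct (inA0 Rr z); nra. }
  assert (HDpos : forall k, 0 <= D k).
  { intros k. replace (D k) with (dz (Z.of_nat k) + dz (- Z.of_nat k - 1)%Z) by (unfold D, dz, M, T; ring).
    pose proof (Hdz (Z.of_nat k)). pose proof (Hdz (- Z.of_nat k - 1)%Z). lra. }
  assert (HS0 : 0 <= Series D).
  { pose proof (Series_le (fun _ => 0) D (fun k => conj (Rle_refl 0) (HDpos k)) (ex_intro _ _ HD)).
    rewrite (Series_fin (fun _ => 0) 0) in H by auto. simpl in H. exact H. }
  rewrite (is_series_unique _ _ HD) in HS0.
  rewrite Hval. unfold C. lra.
Qed.
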